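(* Let $(\mathbf{P},d_{\mathbf{P}})$ be a finite metric poset and $M,N$ be $\mathbf{P}$-modules. If there exists a Galois coupling of $(M,N)$, then $\mathsf{Res}(P^M_\bullet,P^N_\bullet)\neq\varnothing$; moreover there exists $(E_\bullet,F_\bullet)\in\mathsf{Res}(P^M_\bullet,P^N_\bullet)$ admitting at least one matching.
   Context: Fix a field $k$; a finite poset is a category with a unique morphism $x\to y$ iff $x\le y$; a $\mathbf{P}$-module is a functor $\mathbf{P}\to$ (finite-dimensional $k$-vector spaces); $g^*$ is precomposition with a monotone map $g$. A Galois insertion $f:\mathbf{Q}\rightleftarrows\mathbf{P}:g$ consists of monotone maps with $f(u)\le x\iff u\le g(x)$ and $f\circ g=\mathrm{id}_{\mathbf{P}}$. A Galois coupling of $(M,N)$ is $(\mathbf{Q},f\dashv g,h\dashv i,\Gamma)$ with $\mathbf{Q}$ a finite poset, $f:\mathbf{Q}\rightleftarrows\mathbf{P}:g$, $h:\mathbf{Q}\rightleftarrows\mathbf{P}:i$ Galois insertions and a $\mathbf{Q}$-module $\Gamma$ with $g^*\Gamma\cong M$, $i^*\Gamma\cong N$. For $x\in\mathbf{P}$, $k[\mathbf{P}]_x$ is the module with value $k$ at $y\ge x$, $0$ elsewhere, identity maps (the indecomposable projectives). For $y\le x$, $\rho(x\ge y):k[\mathbf{P}]_x\to k[\mathbf{P}]_y$ is the canonical morphism (identity at each $z\ge x$), $0$ otherwise. For projectives with fixed decompositions $E=\bigoplus_{x\in\mathrm{smd}(E)}k[\mathbf{P}]_x$, $F=\bigoplus_{y\in\mathrm{smd}(F)}k[\mathbf{P}]_y$,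 each $\alpha:E\to F$ is uniquely $[a_{x,y}\rho(x\ge y)]$ with $a_{x,y}=0$ unless $x\ge y$; $\mathrm{Mat}(\alpha)=[a_{x,y}]$. Projective resolutions $E_\bullet=(E_i,\partial_i:E_{i+1}\to E_i)_{i\ge0}$ are taken with fixed decompositions of their terms, $|E_i|$ being the number of summands; $P^M_\bullet$ is a minimal projective resolution of $M$. $\mathsf{Res}(P^M_\bullet,P^N_\bullet)$ is the set of pairs $(E_\bullet,F_\bullet)$ of projective resolutions of $M$ and $N$ with $|E_i|=|F_i|$ for all $i$. A matching of $(E_\bullet,F_\bullet)$ is a family of bijections $B_i:\mathrm{smd}(E_i)\to\mathrm{smd}(F_i)$ such that the $(x',x)$-entry of $\mathrm{Mat}(\partial^E_i)$ equals the $(B_{i+1}(x'),B_i(x))$-entry of $\mathrm{Mat}(\partial^F_i)$ for all $i$, $x\in\mathrm{smd}(E_i)$, $x'\in\mathrm{smd}(E_{i+1})$. *)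

(* Defs.v *)
From HB Require Import structures.
From mathcomp Require Import all_boot all_order all_algebra.
Set Implicit Arguments.
Unset Strict Implicit.
Unset Printing Implicit Defensive.
Import Order.TTheory GRing.Theory.
Local Open Scope ring_scope.

Section PMod.
Variables (k : fieldType) (d : Order.disp_t) (P : finPOrderType d).

(* A P-module: a finite-dimensional k-space k^(pdim x) at each x, and for
   x <= y a linear map pmap x y : k^(pdim x) -> k^(pdim y), acting on ROW
   vectors (v |-> v *m pmap x y).  Values for x not <= y are irrelevant. *)
Record pmod := PMod {
  pdim : P -> nat;
  pmap : forall x y : P, 'M[k]_(pdim x, pdim y) }.

Definition is_pmod (M : pmod) : Prop :=
  (forall x, pmap M x x = 1%:M) /\
  (forall x y z, (x <= y)%O -> (y <= z)%O -> pmap M x y *m pmap M y z = pmap M x z).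

Definition pmor (M N : pmod) := forall x : P, 'M[k]_(pdim M x, pdim N x).

Definition is_pmor (M N : pmod) (phi : pmor M N) : Prop :=
  forall x y, (x <= y)%O -> pmap M x y *m phi y = phi x *m pmap N x y.

Definition pmod_iso (M N : pmod) : Prop :=
  exists (phi : pmor M N) (psi : pmor N M),
    is_pmor phi /\ is_pmor psi /\
    (forall x, phi x *m psi x = 1%:M) /\ (forall x, psi x *m phi x = 1%:M).

Definition supp (n : nat) (lab : 'I_n -> P) (z : P) : {pred 'I_n} :=
  [pred j | (lab j <= z)%O].

(* E = (+)_{j < n} k[P]_{lab j}, the projective with fixed decomposition *)
Definition free_mod (n : nat) (lab : 'I_n -> P) : pmod :=
  @PMod (fun z => #|supp lab z|)
    (fun z w => \matrix_(a, b)
        ((@enum_val _ (supp lab z) a == @enum_val _ (supp lab w) b)%:R)).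

(* the morphism E -> F with Mat = A, i.e. [A x' x rho(x' >= x)] *)
Definition induced (n m : nat) (la : 'I_n -> P) (lb : 'I_m -> P)
  (A : 'M[k]_(n, m)) : pmor (free_mod la) (free_mod lb) :=
  fun z => \matrix_(a, b) A (@enum_val _ (supp la z) a) (@enum_val _ (supp lb z) b).

(* A projective chain E_1 -> E_0 with fixed decompositions:
   E_i has rsz i summands labelled rlab i, and partial_i : E_{i+1} -> E_i
   has matrix rdif i (rows: summands of E_{i+1}, columns: summands of E_i). *)
Record pres := PRes {
  rsz : nat -> nat;
  rlab : forall i, 'I_(rsz i) -> P;
  rdif : forall i, 'M[k]_(rsz i.+1, rsz i) }.

Definition is_proj_resolution (M : pmod) (E : pres) : Prop :=
  (forall i (x' : 'I_(rsz E i.+1)) (x : 'I_(rsz E i)), rdif E i x' x != 0 -> (@rlab E i x <= @rlab E i.+1 x')%O) /\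
  exists eps : pmor (free_mod (@rlab E 0)) M,
    is_pmor eps /\
    (forall z, row_full (eps z)) /\
    (forall z, (induced (@rlab E 1) (@rlab E 0) (rdif E 0) z == kermx (eps z))%MS) /\
    (forall i z, (induced (@rlab E i.+2) (@rlab E i.+1) (rdif E i.+1) z
                  == kermx (induced (@rlab E i.+1) (@rlab E i) (rdif E i) z))%MS).

Definition in_Res (M N : pmod) (E F : pres) : Prop :=
  is_proj_resolution M E /\ is_proj_resolution N F /\ (forall i, rsz E i = rsz F i).

Definition has_matching (E F : pres) : Prop :=
  exists B : forall i, 'I_(rsz E i) -> 'I_(rsz F i),
    (forall i, bijective (B i)) /\
    (forall i (x' : 'I_(rsz E i.+1)) (x : 'I_(rsz E i)),
        rdif E i x' x = rdif F i (B i.+1 x') (B i x)).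

End PMod.

Definition pullback (k : fieldType) (dQ dP : Order.disp_t)
  (Q : finPOrderType dQ) (P : finPOrderType dP) (g : Q -> P) (M : pmod k P)
  : pmod k Q :=
  @PMod k dQ Q (fun u => pdim M (g u)) (fun u v => pmap M (g u) (g v)).

Definition galois_insertion (dQ dP : Order.disp_t)
  (Q : finPOrderType dQ) (P : finPOrderType dP) (f : Q -> P) (g : P -> Q) : Prop :=
  (forall u v, (u <= v)%O -> (f u <= f v)%O) /\
  (forall x y, (x <= y)%O -> (g x <= g y)%O) /\
  (forall u x, (f u <= x)%O <-> (u <= g x)%O) /\
  (forall x, f (g x) = x).

Definition galois_coupling_exists (k : fieldType) (d : Order.disp_t)
  (P : finPOrderType d) (M N : pmod k P) : Prop :=
  exists (dQ : Order.disp_t) (Q : finPOrderType dQ)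
         (f : Q -> P) (g : P -> Q) (h : Q -> P) (i : P -> Q) (Gam : pmod k Q),
    galois_insertion f g /\ galois_insertion h i /\ is_pmod Gam /\
    pmod_iso (pullback g Gam) M /\ pmod_iso (pullback i Gam) N.

(* Main.v *)
Require Import Defs.
From HB Require Import structures.
From mathcomp Require Import all_boot all_order all_algebra.
From Stdlib Require Import FunctionalExtensionality.

Module Helpers.
Set Implicit Arguments.
Unset Strict Implicit.
Unset Printing Implicit Defensive.
Import Order.TTheory GRing.Theory.
Local Open Scope ring_scope.

Section Sel.
Variable k : fieldType.

Definition Sel n (p : {pred 'I_n}) : 'M[k]_(#|p|, n) :=
  \matrix_(a, j) (enum_val a == j)%:R.

Lemma Sel_mul n (p : {pred 'I_n}) m (X : 'M[k]_(n, m)) :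
  Sel p *m X = \matrix_(a, c) X (enum_val a) c.
Proof.
apply/matrixP => a c; rewrite !mxE (bigD1 (enum_val a)) //= big1 ?addr0.
  by rewrite mxE eqxx mul1r.
by move=> j /negbTE nj; rewrite mxE eq_sym nj mul0r.
Qed.

Lemma mul_SelT n (p : {pred 'I_n}) m (X : 'M[k]_(m, n)) :
  X *m (Sel p)^T = \matrix_(i, b) X i (enum_val b).
Proof.
apply/matrixP => i b; rewrite !mxE (bigD1 (enum_val b)) //= big1 ?addr0.
  by rewrite !mxE eqxx mulr1.
by move=> j /negbTE nj; rewrite !mxE eq_sym nj mulr0.
Qed.

Lemma Sel_SelT n (p q : {pred 'I_n}) :
  Sel p *m (Sel q)^T = \matrix_(a, b) (enum_val a == enum_val b)%:R.
Proof. by rewrite Sel_mul; apply/matrixP => a b; rewrite !mxE eq_sym. Qed.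

Lemma Sel_SelT1 n (p : {pred 'I_n}) : Sel p *m (Sel p)^T = 1%:M.
Proof.
rewrite Sel_SelT; apply/matrixP => a b; rewrite !mxE.
by rewrite (inj_eq enum_val_inj).
Qed.

Lemma SelT_Sel n (p : {pred 'I_n}) :
  (Sel p)^T *m Sel p = \matrix_(i, j) ((i \in p) && (i == j))%:R.
Proof.
apply/matrixP => i j; rewrite !mxE.
case: (boolP (i \in p)) => ip /=.
  rewrite (bigD1 (enum_rank_in ip i)) //= big1 ?addr0.
    by rewrite !mxE enum_rankK_in // eqxx mul1r.
  move=> a na; rewrite !mxE; case: eqP => [e|]; last by rewrite mul0r.
  by case/eqP: na; apply: enum_val_inj; rewrite enum_rankK_in.
rewrite big1 // => a _; rewrite !mxE; case: eqP => [e|]; last by rewrite mul0r.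
by case/negP: ip; rewrite -e enum_valP.
Qed.

Lemma Sel_sub n (p q : {pred 'I_n}) : {subset p <= q} ->
  Sel p *m ((Sel q)^T *m Sel q) = Sel p.
Proof.
move=> pq; rewrite Sel_mul SelT_Sel; apply/matrixP => a j; rewrite !mxE.
by rewrite pq // enum_valP.
Qed.

End Sel.


Section Gen.
Variables (k : fieldType) (dQ : Order.disp_t) (Q : finPOrderType dQ).

Lemma in_supp n (lab : 'I_n -> Q) z j : (j \in supp lab z) = (lab j <= z)%O.
Proof. by []. Qed.

Lemma pmap_free n (lab : 'I_n -> Q) x y :
  Defs.pmap (free_mod k lab) x y = Sel k (supp lab x) *m (Sel k (supp lab y))^T.
Proof. by rewrite Sel_SelT. Qed.

Lemma induced_eq n m (la : 'I_n -> Q) (lb : 'I_m -> Q) (A : 'M[k]_(n, m)) z :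
  induced la lb A z = Sel k (supp la z) *m A *m (Sel k (supp lb z))^T.
Proof.
by rewrite -mulmxA Sel_mul mul_SelT; apply/matrixP => a b; rewrite !mxE.
Qed.

Definition labc n m (la : 'I_n -> Q) (lb : 'I_m -> Q) (A : 'M[k]_(n, m)) :=
  forall a b, A a b != 0 -> (lb b <= la a)%O.

Lemma mul_diag n m (p : {pred 'I_n}) (X : 'M[k]_(m, n)) i j :
  (X *m \matrix_(i, j) ((i \in p) && (i == j))%:R) i j = X i j * (j \in p)%:R.
Proof.
rewrite !mxE (bigD1 j) //= big1 ?addr0; first by rewrite mxE eqxx andbT.
by move=> c /negbTE nc; rewrite mxE nc andbF mulr0.
Qed.

Lemma induced_pmor n m (la : 'I_n -> Q) (lb : 'I_m -> Q) (A : 'M[k]_(n, m)) :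
  labc la lb A -> is_pmor (induced la lb A).
Proof.
move=> hA x y xy; rewrite !induced_eq !pmap_free.
set Sx := Sel k (supp la x); set Sy := Sel k (supp la y).
set Tx := Sel k (supp lb x); set Ty := Sel k (supp lb y).
have e1 : Sx *m Sy^T *m (Sy *m A *m Ty^T) = Sx *m A *m Ty^T.
  rewrite !mulmxA -(mulmxA Sx) Sel_sub //.
  by move=> j; rewrite !in_supp => h; apply: le_trans xy.
have e2 : Sx *m (A *m (Tx^T *m Tx)) = Sx *m A.
  rewrite !Sel_mul SelT_Sel; apply/matrixP => a b; rewrite mxE [RHS]mxE mul_diag.
  have hx : (la (enum_val a) <= x)%O := enum_valP a.
  case: (eqVneq (A (enum_val a) b) 0) => [->|nz]; first by rewrite mul0r.
  set t := (X in A _ _ * (nat_of_bool X)%:R); have -> : t by exact: (le_trans (hA _ _ nz) hx). by rewrite mulr1.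
rewrite e1; have -> : Sx *m A *m Tx^T *m (Tx *m Ty^T) = Sx *m (A *m (Tx^T *m Tx)) *m Ty^T.
  by rewrite !mulmxA.
by rewrite e2.
Qed.

Lemma ker_closed (dm dn : Q -> nat) (F : forall x y, 'M[k]_(dm x, dm y))
  (G : forall x y, 'M[k]_(dn x, dn y)) (phi : forall x, 'M[k]_(dm x, dn x)) :
  (forall x y, (x <= y)%O -> F x y *m phi y = phi x *m G x y) ->
  forall x y, (x <= y)%O -> (kermx (phi x) *m F x y <= kermx (phi y))%MS.
Proof.
move=> h x y xy; apply/sub_kermxP.
by rewrite -mulmxA h // mulmxA mulmx_ker mul0mx.
Qed.


End Gen.


Section Gen2.
Variables (k : fieldType) (dQ : Order.disp_t) (Q : finPOrderType dQ).

Lemma row_Sel n (p : {pred 'I_n}) m (X : 'M[k]_(n, m)) a :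
  row a (Sel k p *m X) = row (enum_val a) X.
Proof. by rewrite Sel_mul; apply/rowP => c; rewrite !mxE. Qed.

Lemma Sel_col0 n (p : {pred 'I_n}) m (X : 'M[k]_(m, #|p|)) i j :
  j \notin p -> (X *m Sel k p) i j = 0.
Proof.
move=> jp; rewrite mxE big1 // => c _; rewrite mxE.
case: eqP => [e|]; last by rewrite mulr0.
by case/negP: jp; rewrite -e enum_valP.
Qed.

Definition gn n := #|{: Q * 'I_n}|.
Definition glab n (a : 'I_(gn n)) : Q := (enum_val a).1.
Definition gT n (lab : 'I_n -> Q) (S : forall z : Q, 'M[k]_(#|supp lab z|)) x : 'M[k]_n :=
  (Sel k (supp lab x))^T *m (S x *m Sel k (supp lab x)).
Arguments gT {n} lab S x.
Definition gA n (lab : 'I_n -> Q) (S : forall z : Q, 'M[k]_(#|supp lab z|)) : 'M[k]_(gn n, n) :=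
  \matrix_(a, j) gT lab S (enum_val a).1 (enum_val a).2 j.

Arguments gA {n} lab S.

Lemma gA_labc n (lab : 'I_n -> Q) S : labc (@glab n) lab (gA lab S).
Proof.
move=> a j; rewrite mxE /gT mulmxA.
case: (boolP (j \in supp lab (enum_val a).1)) => [//|jp].
by rewrite Sel_col0 // eqxx.
Qed.

Lemma gA_ind n (lab : 'I_n -> Q) S :
  (forall x z, (x <= z)%O -> (S x *m Defs.pmap (free_mod k lab) x z <= S z)%MS) ->
  forall z, (induced (@glab n) lab (gA lab S) z == S z)%MS.
Proof.
move=> hS z; rewrite induced_eq; apply/andP; split.
  apply/row_subP => a; rewrite -mulmxA row_Sel row_mul.
  set u := enum_val (enum_val a).
  have hz : (u.1 <= z)%O := enum_valP a.
  have -> : row (enum_val a) (gA lab S) = row u.2 (gT lab S u.1).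
    by apply/rowP => c; rewrite !mxE.
  rewrite -row_mul; apply: submx_trans (row_sub _ _) _.
  rewrite /gT -!mulmxA -pmap_free; apply: mulmx_sub; exact: hS.
have e : S z = Sel k (supp lab z) *m (gT lab S z *m (Sel k (supp lab z))^T).
  by rewrite /gT -!mulmxA Sel_SelT1 mulmx1 mulmxA Sel_SelT1 mul1mx.
rewrite {1}e; apply: submx_trans (mulmx_sub _ (submx_refl _)) _.
apply/row_subP => i.
have hin : (enum_rank (z, i) : 'I_(gn n)) \in supp (@glab n) z.
  by rewrite in_supp /glab enum_rankK.
apply: (eq_row_sub (enum_rank_in hin (enum_rank (z, i)))).
rewrite -mulmxA row_Sel row_mul enum_rankK_in // row_mul; congr (_ *m _).
by apply/rowP => c; rewrite !mxE enum_rankK.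
Qed.

End Gen2.


Section Res.
Variables (k : fieldType) (dQ : Order.disp_t) (Q : finPOrderType dQ).
Variable G : pmod k Q.

Definition J := {x : Q & 'I_(pdim G x)}.
Definition n0 := #|{: {x : Q & 'I_(pdim G x)}}|.
Definition lab0 (a : 'I_n0) : Q := tag (enum_val a).
Definition Efull y : 'M[k]_(n0, pdim G y) :=
  \matrix_(j, c) Defs.pmap G (tag (enum_val j)) y (tagged (enum_val j)) c.
Definition eps : pmor (free_mod k lab0) G := fun y => Sel k (supp lab0 y) *m Efull y.

Hypothesis HG : is_pmod G.

Lemma eps_pmor : is_pmor eps.
Proof.
move=> x y xy; rewrite pmap_free /eps.
rewrite !mulmxA -(mulmxA (Sel k _)) Sel_sub; last first.
  by move=> j; rewrite !in_supp => h; apply: le_trans xy.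
rewrite -mulmxA !Sel_mul; apply/matrixP => a c; rewrite !mxE.
set u := enum_val (enum_val a).
have ux : (tag u <= x)%O := enum_valP a.
rewrite -(proj2 HG _ _ _ ux xy) mxE; apply: eq_bigr => b _; by rewrite mxE.
Qed.

Lemma eps_full z : row_full (eps z).
Proof.
rewrite -sub1mx; apply/row_subP => c.
have hin : (enum_rank (Tagged (fun x => 'I_(pdim G x)) c) : 'I_n0) \in supp lab0 z.
  by rewrite in_supp /lab0 enum_rankK.
apply: (eq_row_sub (enum_rank_in hin (enum_rank (Tagged (fun x => 'I_(pdim G x)) c)))).
rewrite /eps row_Sel enum_rankK_in //; apply/rowP => c'; rewrite !mxE enum_rankK /=.
by rewrite (proj1 HG z) mxE.
Qed.

Record stage := Stage { sn : nat; slab : 'I_sn -> Q; pn : nat; plab : 'I_pn -> Q;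
  sA : 'M[k]_(sn, pn) }.

Definition st0 := @Stage (gn Q n0) (@glab _ _ n0) n0 lab0 (@gA k dQ Q _ lab0 (fun z => kermx (eps z))).
Definition gstep (s : stage) : stage :=
  @Stage (gn Q (sn s)) (@glab _ _ (sn s)) (sn s) (@slab s)
    (@gA k dQ Q _ (@slab s) (fun z => kermx (induced (@slab s) (@plab s) (sA s) z))).
Definition st i := iter i gstep st0.

Definition EG : pres k Q :=
  @PRes k dQ Q (fun i => pn (st i)) (fun i => @plab (st i))
    (fun i => (sA (st i) : 'M[k]_(pn (st i.+1), pn (st i)))).

Lemma st_labc i : labc (@slab (st i)) (@plab (st i)) (sA (st i)).
Proof. by case: i => [|i]; apply: gA_labc. Qed.

Lemma EG_res : is_proj_resolution G EG.
Proof.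
split.
  move=> i x' x; exact: (@st_labc i x' x).
exists (eps : pmor (free_mod k (@rlab _ _ _ EG 0)) G); split; first exact: eps_pmor.
split; first exact: eps_full.
split.
  move=> z; apply: gA_ind; exact: (ker_closed eps_pmor).
move=> i z; apply: gA_ind; exact: (ker_closed (induced_pmor (@st_labc i))).
Qed.

End Res.


Section Gres.
Variables (k : fieldType) (dP : Order.disp_t) (P : finPOrderType dP).

Definition fm n (S : P -> {pred 'I_n}) : pmod k P :=
  @PMod k dP P (fun z => #|S z|)
    (fun z w => \matrix_(a, b) ((@enum_val _ (S z) a == @enum_val _ (S w) b)%:R)).

Definition ind n m (S1 : P -> {pred 'I_n}) (S2 : P -> {pred 'I_m}) (A : 'M[k]_(n, m))
  : pmor (fm S1) (fm S2) :=
  fun z => \matrix_(a, b) A (@enum_val _ (S1 z) a) (@enum_val _ (S2 z) b).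

Definition gres (M : pmod k P) (sz : nat -> nat) (S : forall i, P -> {pred 'I_(sz i)})
  (A : forall i, 'M[k]_(sz i.+1, sz i)) : Prop :=
  exists eps : pmor (fm (S 0)) M,
    is_pmor eps /\ (forall z, row_full (eps z)) /\
    (forall z, (ind (S 1) (S 0) (A 0) z == kermx (eps z))%MS) /\
    (forall i z, (ind (S i.+2) (S i.+1) (A i.+1) z == kermx (ind (S i.+1) (S i) (A i) z))%MS).

Lemma res_gres (M : pmod k P) (E : pres k P) :
  is_proj_resolution M E -> gres M (fun i => supp (@rlab _ _ _ E i)) (rdif E).
Proof. by case=> _ H; exact: H. Qed.

Lemma gres_res (M : pmod k P) (E : pres k P) :
  (forall i (x' : 'I_(rsz E i.+1)) (x : 'I_(rsz E i)), rdif E i x' x != 0 ->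
     (@rlab _ _ _ E i x <= @rlab _ _ _ E i.+1 x')%O) ->
  gres M (fun i => supp (@rlab _ _ _ E i)) (rdif E) -> is_proj_resolution M E.
Proof. by move=> h1 h2; split; [exact: h1 | exact: h2]. Qed.

Lemma gres_iso (M M' : pmod k P) sz S A :
  @gres M sz S A -> pmod_iso M M' -> @gres M' sz S A.
Proof.
case=> eps [h1 [h2 [h3 h4]]] [phi [psi [hphi [hpsi [e1 e2]]]]].
have kerE z : (kermx (eps z *m phi z) :=: kermx (eps z))%MS.
  apply/eqmxP; apply/andP; split; apply/sub_kermxP.
    have e : eps z = eps z *m phi z *m psi z by rewrite -mulmxA e1 mulmx1.
    by rewrite [X in _ *m X = _]e mulmxA mulmx_ker mul0mx.
  by rewrite mulmxA mulmx_ker mul0mx.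
exists (fun z => eps z *m phi z); split.
  move=> x y xy /=; rewrite mulmxA h1 // -!mulmxA hphi //.
split.
  move=> z; rewrite -sub1mx.
  have h1p : (1%:M <= phi z)%MS by rewrite -(e2 z) submxMl.
  apply: submx_trans h1p _; rewrite -{1}[phi z]mul1mx; apply: submxMr.
  by rewrite sub1mx.
split; last exact: h4.
by move=> z /=; rewrite !(kerE z); exact: h3.
Qed.

End Gres.

Lemma gres_pull (k : fieldType) (dQ dP : Order.disp_t) (Q : finPOrderType dQ)
  (P : finPOrderType dP) (g : P -> Q) (G : pmod k Q) sz S A :
  (forall x y, (x <= y)%O -> (g x <= g y)%O) ->
  @gres k _ Q G sz S A -> @gres k _ P (pullback g G) sz (fun i z => S i (g z)) A.
Proof.
move=> mg [eps [h1 [h2 [h3 h4]]]].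
exists (fun z => eps (g z)); split.
  by move=> x y xy; exact: h1 (mg _ _ xy).
split; first by move=> z; exact: h2.
split; first by move=> z; exact: h3.
by move=> i z; exact: h4.
Qed.

End Helpers.
Import Helpers.
Unset Implicit Arguments.
Set Strict Implicit.


Lemma supp_pull (dQ dP : Order.disp_t) (Q : finPOrderType dQ) (P : finPOrderType dP)
  (f : Q -> P) (g : P -> Q) n (lab : 'I_n -> Q) :
  galois_insertion f g -> (fun z => supp (f \o lab) z) = (fun z => supp lab (g z)).
Proof.
move=> [_ [_ [adj _]]]; apply: functional_extensionality => z.
apply: functional_extensionality => j; rewrite /supp /=.
by apply/idP/idP => /adj.
Qed.

Lemma pull_res (k : fieldType) (dQ dP : Order.disp_t) (Q : finPOrderType dQ)
  (P : finPOrderType dP) (f : Q -> P) (g : P -> Q) (G : pmod k Q) (M : pmod k P)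
  (E : pres k Q) :
  galois_insertion f g -> is_proj_resolution G E -> pmod_iso (pullback g G) M ->
  is_proj_resolution M (@PRes k dP P (rsz E) (fun i => f \o @rlab _ _ _ E i) (rdif E)).
Proof.
move=> gi hE iso; apply: gres_res.
  move=> i x' x /= nz; apply: (proj1 gi); exact: (proj1 hE i x' x nz).
have -> : (fun i => supp (@rlab _ _ _ (@PRes k dP P (rsz E) (fun i => f \o @rlab _ _ _ E i) (rdif E)) i))
  = (fun i z => supp (@rlab _ _ _ E i) (g z)).
  apply (@functional_extensionality_dep nat (fun i => P -> {pred 'I_(rsz E i)})); intro j; simpl; exact: supp_pull.
refine (gres_iso _ iso).
apply (@gres_pull k dQ dP Q P g G (rsz E) (fun i => supp (@rlab _ _ _ E i)) (rdif E)).
  exact: (proj1 (proj2 gi)).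
exact: res_gres.
Qed.

Theorem corollary5p3 (k : fieldType) (d : Order.disp_t) (P : finPOrderType d)
  (M N : pmod k P) :
  is_pmod M -> is_pmod N -> galois_coupling_exists M N ->
  (exists E F : pres k P, in_Res M N E F) /\
  (exists E F : pres k P, in_Res M N E F /\ has_matching E F).
Proof.
move=> _ _ [dQ [Q [f [g [h [i [Gam [Hfg [Hhi [HG [IM IN]]]]]]]]]]].
have R := EG_res HG.
set E := @PRes k d P (rsz (EG Gam)) (fun j => f \o @rlab _ _ _ (EG Gam) j) (rdif (EG Gam)).
set F := @PRes k d P (rsz (EG Gam)) (fun j => h \o @rlab _ _ _ (EG Gam) j) (rdif (EG Gam)).
have hR : in_Res M N E F.
  split; first exact: pull_res Hfg R IM.
  by split; first exact: pull_res Hhi R IN.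
split; exists E, F => //; split => //.
exists (fun j => id); split => // j; exact: (Bijective (fun x => erefl) (fun x => erefl)).
Qed.
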